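(* Let $n=2^s$, $q=2^r$ ($s,r$ positive integers), $N=|SL(n,q)|$, and let $\{C_i\}_{i=0}^N$ be the weight distribution of the code $C(SL(n,q))$. Then $C_i=C_{N-i}$ for $0\le i\le N$.
   Context: $Tr$ is the matrix trace; for a fixed ordering $g_1,\dots,g_N$ of $SL(n,q)$ and $v=(Tr(g_1),\dots,Tr(g_N))\in\mathbb{F}_q^N$, $C(SL(n,q))=\{u\in\mathbb{F}_2^N:u\cdot v=0\}$ (dot product in $\mathbb{F}_q$). $C_i$ is the number of codewords of Hamming weight $i$. *)

(* Defs.v *)
From HB Require Import structures.
From mathcomp Require Import all_boot all_order all_algebra all_fingroup all_field.
Set Implicit Arguments. Unset Strict Implicit. Unset Printing Implicit Defensive.
Import GRing.Theory.
Local Open Scope ring_scope.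

Definition SLt (F : finFieldType) (n : nat) : finType :=
  {A : 'M[F]_n | \det A == 1}.

Definition SLcard (F : finFieldType) (n : nat) : nat := #|SLt F n|.

Definition word (F : finFieldType) (n : nat) := {ffun SLt F n -> bool}.

Definition SLcode (F : finFieldType) (n : nat) : {set word F n} :=
  [set u : word F n | \sum_(g : SLt F n) (u g)%:R * \tr (val g) == 0].

Definition hweight (F : finFieldType) (n : nat) (u : word F n) : nat :=
  #|[set g : SLt F n | u g]|.

Definition weight_distr (F : finFieldType) (n : nat) (i : nat) : nat :=
  #|[set u in SLcode F n | hweight u == i]|.

(* Main.v *)
Require Import Defs.
From mathcomp Require Import all_boot all_order all_algebra all_fingroup all_field.
Set Implicit Arguments. Unset Strict Implicit. Unset Printing Implicit Defensive.
Import GRing.Theory.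
Local Open Scope ring_scope.

Section S.
Variable F : finFieldType.

Lemma det_transv n (i j : 'I_n) : i != j ->
  \det (1%:M + delta_mx i j : 'M[F]_n) = 1.
Proof.
move=> nij.
have H : forall (a b : 'I_n), (b < a)%N -> \det (1%:M + delta_mx a b : 'M[F]_n) = 1.
  move=> a b lt_ba; rewrite det_trig.
    rewrite big1 // => k _; rewrite !mxE eqxx /=.
    have : ~~ ((k == a) && (k == b)).
      apply/andP => -[/eqP ka /eqP kb]; move: lt_ba; rewrite -ka -kb ltnn //.
    by case: ((k == a) && (k == b)) => //= _; rewrite addr0.
  apply/is_trig_mxP => k l lt_kl; rewrite !mxE.
  have -> : (k == l) = false by apply/negbTE; rewrite neq_ltn lt_kl.
  have -> : (k == a) && (l == b) = false.
    apply/negbTE/andP => -[/eqP ka /eqP lb]; subst.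
    by move: (ltn_trans lt_kl lt_ba); rewrite ltnn.
  by rewrite add0r.
case: (ltngtP i j) => [lt_ij|lt_ji|/val_inj eq_ij]; last by rewrite eq_ij eqxx in nij.
  by rewrite -det_tr linearD /= trmx1 trmx_delta H.
by rewrite H.
Qed.

Lemma sum_SL_zero n : (1 < n)%N -> \sum_(g : SLt F n) val g = 0.
Proof.
move: n => [|[|m]] // _.
set S := \sum_(g : SLt F m.+2) val g.
have key : forall i j : 'I_m.+2, i != j -> forall k, S j k = 0.
  move=> i j nij k.
  set T := (1%:M + delta_mx i j : 'M[F]_m.+2).
  have dT : \det T = 1 by apply: det_transv.
  have Tu : T \in unitmx by rewrite unitmxE dT unitr1.
  have Pf : forall g : SLt F m.+2, \det (T *m val g) == 1.
    by move=> g; rewrite det_mulmx dT mul1r; apply: (valP g).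
  pose f (g : SLt F m.+2) : SLt F m.+2 := Sub (T *m val g) (Pf g).
  have finj : injective f.
    move=> g1 g2 /(congr1 val) /= e; apply: val_inj.
    by move: e; rewrite /f ?SubK => /(congr1 (mulmx (invmx T))); rewrite !mulKmx.
  have ES : S = T *m S.
    rewrite /S mulmx_sumr [LHS](reindex_inj finj); apply: eq_bigr => g _.
    by rewrite /f ?SubK.
  have E0 : delta_mx i j *m S = 0.
    by apply/eqP; rewrite -(subrr S) {2}ES /T mulmxDl mul1mx addrC addKr.
  have := congr1 (fun A : 'M[F]_m.+2 => A i k) E0.
  rewrite /= mxE (bigD1 j) //= big1 ?addr0.
    by rewrite !mxE !eqxx mul1r.
  by move=> l nl; rewrite mxE eqxx /= (negbTE nl) mul0r.
apply/matrixP => j k; rewrite mxE.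
case: (boolP (j == ord0)) => [/eqP ->|nj].
  by apply: (key (inord 1)); rewrite -val_eqE /= inordK.
by apply: (key ord0); rewrite eq_sym.
Qed.

Lemma sum_tr_zero n : (1 < n)%N -> \sum_(g : SLt F n) \tr (val g) = 0.
Proof.
by move=> hn; rewrite -raddf_sum /= sum_SL_zero // raddf0.
Qed.

Definition compl n (u : word F n) : word F n := [ffun g => ~~ u g].

Lemma complK n : involutive (@compl n).
Proof. by move=> u; apply/ffunP => g; rewrite !ffunE negbK. Qed.

Lemma compl_code n u : (1 < n)%N -> u \in SLcode F n -> compl u \in SLcode F n.
Proof.
move=> hn; rewrite !inE => /eqP H.
have -> : \sum_(g : SLt F n) ((compl u) g)%:R * \tr (val g)
        = \sum_(g : SLt F n) \tr (val g) - \sum_(g : SLt F n) (u g)%:R * \tr (val g).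
  rewrite -sumrB; apply: eq_bigr => g _; rewrite ffunE.
  by case: (u g) => /=; rewrite ?mul1r ?mul0r ?subrr ?subr0.
by rewrite H sum_tr_zero // subr0.
Qed.

Lemma compl_weight n u : hweight (@compl n u) = (SLcard F n - hweight u)%N.
Proof.
rewrite /hweight /SLcard.
have -> : [set g | compl u g] = ~: [set g | u g].
  by apply/setP => g; rewrite !inE ffunE.
by rewrite cardsCs setCK.
Qed.

Lemma wd_le n i : (1 < n)%N -> (i <= SLcard F n)%N ->
  (weight_distr F n i <= weight_distr F n (SLcard F n - i))%N.
Proof.
move=> hn hi; rewrite /weight_distr.
rewrite -(card_imset _ (can_inj (@complK n))).
apply: subset_leq_card; apply/subsetP => v /imsetP [u].
rewrite !inE => /andP [cu /eqP wu] ->.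
have := compl_code hn (u:=u); rewrite !inE => -> //; by rewrite compl_weight wu eqxx.
Qed.

End S.

Theorem corollary17 (F : finFieldType) (r s : nat) :
  (0 < r)%N -> (0 < s)%N -> #|F| = (2 ^ r)%N ->
  forall i : nat, (i <= SLcard F (2 ^ s))%N ->
    weight_distr F (2 ^ s) i = weight_distr F (2 ^ s) (SLcard F (2 ^ s) - i).
Proof.
move=> _ hs _ i hi.
have hn : (1 < 2 ^ s)%N by rewrite -{1}(expn0 2) ltn_exp2l.
apply/eqP; rewrite eqn_leq wd_le //=.
have := wd_le hn (leq_subr i (SLcard F (2 ^ s))).
by rewrite subKn.
Qed.
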